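(* Let $v\in\Sigma^*$, let $u$ be a $v$-minimal word and $i\in\mathrm{supp}(u)$. The relation $\sigma_i$ on $\mathcal{I}_i$ is right-compatible: if $g\,\sigma_i\,f$, then $g\theta_i(a)\,\sigma_i\,f\theta_i(a)$ for every $a\in\Sigma^*$.
   Context: Let $\mathcal{A}=\langle Q,\Sigma,\delta\rangle$ be a synchronizing automaton with $n$ states $q_1,\dots,q_n$; write $q\cdot u$ for the action of $u\in\Sigma^*$ (extended to subsets) and $\mathrm{rk}(u)=|Q\cdot u|$. Each word acts linearly on $\mathbb{C}Q$ by $q\mapsto q\cdot u$, preserving $w^\perp=\{x:\langle x,q_1+\dots+q_n\rangle=0\}$; let $\rho:\Sigma^*\to\mathbb{M}_{n-1}(\mathbb{C})$ be the induced representation and $\mathcal{R}$ the $\mathbb{C}$-algebra generated by $\rho(\Sigma^* )$. Write $\mathcal{R}/\mathrm{Rad}(\mathcal{R})\cong\prod_{i=1}^k\mathbb{M}_{n_i}(\mathbb{C})$ (Jacobson radical, Wedderburn–Artin) and let $\theta_i:\Sigma^*\to\mathbb{M}_{n_i}(\mathbb{C})$ be $\rho$ followed by the quotient map and the $i$-th projection; $0_i$ is the zero matrix. The monoid $\theta_i(\Sigma^* )$ has a unique $0$-minimal ideal $\mathcal{I}_i$. The support of a word $z$ is $\mathrm{supp}(z)=\{i:\theta_i(z)\neq0_i\}$. For $v\in\Sigma^*$, a word $u\in\Sigma^*v\Sigma^*$ is $v$-minimal if $\mathrm{supp}(u)\neq\emptyset$ and there is no $z\in\Sigma^*v\Sigma^*$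 with $\emptyset\neq\mathrm{supp}(z)\subsetneq\mathrm{supp}(u)$. For such $u$, $i\in\mathrm{supp}(u)$ and $g\in\mathcal{I}_i$, a word $w$ $u$-represents $g$ if $w\in\Sigma^*u\Sigma^*$, $\theta_i(w)=g$, and either $g=0_i$ or $\mathrm{rk}(w)$ is minimum among all words $w'\in\Sigma^*u\Sigma^*$ with $\theta_i(w')=g$. Define the relation $\sigma_i$ on $\mathcal{I}_i$ by $g\,\sigma_i\,f$ iff either $g=f$, or there exist words $w_1,w_2$ that $u$-represent $g$ and $f$ respectively with $|Q\cdot w_1\cap Q\cdot w_2|>1$. *)

(* Defs.v *)
From HB Require Import structures.
From mathcomp Require Import all_boot all_order all_algebra.
Set Implicit Arguments. Unset Strict Implicit. Unset Printing Implicit Defensive.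
Import GRing.Theory.
Local Open Scope ring_scope.

Definition act (n : nat) (Sigma : finType) (delta : 'I_n -> Sigma -> 'I_n)
  (q : 'I_n) (u : seq Sigma) : 'I_n := foldl delta q u.

Definition imQ (n : nat) (Sigma : finType) (delta : 'I_n -> Sigma -> 'I_n)
  (u : seq Sigma) : {set 'I_n} := [set act delta q u | q : 'I_n].

Definition rk (n : nat) (Sigma : finType) (delta : 'I_n -> Sigma -> 'I_n)
  (u : seq Sigma) : nat := #|imQ delta u|.

Definition synchronizing (n : nat) (Sigma : finType)
  (delta : 'I_n -> Sigma -> 'I_n) : Prop :=
  exists u : seq Sigma, rk delta u = 1%N.

Definition factor_of (Sigma : Type) (v u : seq Sigma) : Prop :=
  exists x y : seq Sigma, u = x ++ v ++ y.

(* matrix of the linear action q |-> q . u on C Q (row-vector convention: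
   the row vector e_p is sent to e_p *m actmx u = e_(p . u)) *)
Definition actmx (C : nzRingType) (n : nat) (Sigma : finType)
  (delta : 'I_n -> Sigma -> 'I_n) (u : seq Sigma) : 'M[C]_n :=
  \matrix_(p, q) ((act delta p u == q)%:R).

(* rho is the representation induced on w^perp = {x | <x, q_1+...+q_n> = 0},
   written in some basis of w^perp: the rows of B form a basis of w^perp. *)
Definition induced_rep (C : fieldType) (n : nat) (Sigma : finType)
  (delta : 'I_n -> Sigma -> 'I_n) (rho : seq Sigma -> 'M[C]_(n.-1)) : Prop :=
  exists B : 'M[C]_(n.-1, n),
    [/\ row_free B,
        B *m (const_mx 1 : 'cV[C]_n) = 0
      & forall u, B *m actmx C delta u = rho u *m B].

Definition gen_alg (C : fieldType) (m : nat) (S : 'M[C]_m -> Prop)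
  (A : 'M[C]_m) : Prop :=
  forall P : 'M[C]_m -> Prop,
    (forall x, S x -> P x) ->
    P 1%:M ->
    (forall x y, P x -> P y -> P (x + y)) ->
    (forall (c : C) x, P x -> P (c *: x)) ->
    (forall x y, P x -> P y -> P (x *m y)) ->
    P A.

Definition unit_in (C : fieldType) (m : nat) (R : 'M[C]_m -> Prop)
  (x : 'M[C]_m) : Prop :=
  exists y, R y /\ y *m x = 1%:M /\ x *m y = 1%:M.

Definition jacobson (C : fieldType) (m : nat) (R : 'M[C]_m -> Prop)
  (x : 'M[C]_m) : Prop :=
  R x /\ forall a, R a -> unit_in R (1%:M - a *m x).

(* Phi = (Phi_i)_i restricted to R induces an isomorphism of C-algebras
   R / Rad(R) ~= prod_{i < k} M_{n_i}(C)  (Wedderburn--Artin data). *)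
Definition wedderburn_data (C : fieldType) (m : nat) (R : 'M[C]_m -> Prop)
  (k : nat) (ni : 'I_k -> nat) (Phi : forall i : 'I_k, 'M[C]_m -> 'M[C]_(ni i))
  : Prop :=
  (forall i, (0 < ni i)%N) /\
  (forall i, Phi i 1%:M = 1%:M) /\
  (forall i (c : C) x y, R x -> R y -> Phi i (c *: x + y) = c *: Phi i x + Phi i y) /\
  (forall i x y, R x -> R y -> Phi i (x *m y) = Phi i x *m Phi i y) /\
  (forall g : forall i : 'I_k, 'M[C]_(ni i),
      exists x, R x /\ forall i, Phi i x = g i) /\
  (forall x, R x -> ((forall i, Phi i x = 0) <-> jacobson R x)).

Definition mon_ideal (C : fieldType) (m : nat) (M I : 'M[C]_m -> Prop) : Prop :=
  (exists x, I x) /\ (forall x, I x -> M x) /\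
  (forall x y, I x -> M y -> I (x *m y) /\ I (y *m x)).

Definition zero_minimal_ideal (C : fieldType) (m : nat) (M I : 'M[C]_m -> Prop)
  : Prop :=
  mon_ideal M I /\ (exists x, I x /\ x <> 0) /\
  forall J, mon_ideal M J -> (forall x, J x -> I x) ->
    (forall x, J x -> x = 0) \/ (forall x, J x <-> I x).

Definition supp (C : fieldType) (Sigma : Type) (k : nat) (ni : 'I_k -> nat)
  (theta : forall i : 'I_k, seq Sigma -> 'M[C]_(ni i)) (z : seq Sigma)
  : {set 'I_k} := [set i | theta i z != 0].

Definition v_minimal (C : fieldType) (Sigma : Type) (k : nat) (ni : 'I_k -> nat)
  (theta : forall i : 'I_k, seq Sigma -> 'M[C]_(ni i)) (v u : seq Sigma) : Prop :=
  factor_of v u /\ supp theta u != set0 /\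
  ~ (exists z, factor_of v z /\ supp theta z != set0 /\
               supp theta z \proper supp theta u).

Definition represents (C : fieldType) (n : nat) (Sigma : finType)
  (delta : 'I_n -> Sigma -> 'I_n) (k : nat) (ni : 'I_k -> nat)
  (theta : forall i : 'I_k, seq Sigma -> 'M[C]_(ni i))
  (u : seq Sigma) (i : 'I_k) (g : 'M[C]_(ni i)) (w : seq Sigma) : Prop :=
  factor_of u w /\ theta i w = g /\
  (g = 0 \/ forall w', factor_of u w' -> theta i w' = g ->
                       (rk delta w <= rk delta w')%N).

Definition sigma_rel (C : fieldType) (n : nat) (Sigma : finType)
  (delta : 'I_n -> Sigma -> 'I_n) (k : nat) (ni : 'I_k -> nat)
  (theta : forall i : 'I_k, seq Sigma -> 'M[C]_(ni i))
  (u : seq Sigma) (i : 'I_k) (g f : 'M[C]_(ni i)) : Prop :=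
  g = f \/
  exists w1 w2, @represents C n Sigma delta k ni theta u i g w1 /\ @represents C n Sigma delta k ni theta u i f w2 /\
                (1 < #|imQ delta w1 :&: imQ delta w2|)%N.

Definition thetaOf (C : fieldType) (m : nat) (Sigma : Type) (k : nat)
  (ni : 'I_k -> nat) (Phi : forall i : 'I_k, 'M[C]_m -> 'M[C]_(ni i))
  (rho : seq Sigma -> 'M[C]_m) (i : 'I_k) (w : seq Sigma) : 'M[C]_(ni i) :=
  Phi i (rho w).

(* Main.v *)
Require Import Defs.
From HB Require Import structures.
From mathcomp Require Import all_boot all_order all_algebra.
Import GRing.Theory.
Local Open Scope ring_scope.

Lemma act_cat (n : nat) (Sigma : finType) (delta : 'I_n -> Sigma -> 'I_n) q x y :
  act delta q (x ++ y) = act delta (act delta q x) y.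
Proof. by rewrite /act foldl_cat. Qed.

Lemma imQ_cat (n : nat) (Sigma : finType) (delta : 'I_n -> Sigma -> 'I_n) x y :
  imQ delta (x ++ y) = (fun q => act delta q y) @: imQ delta x.
Proof.
rewrite /imQ -imset_comp; apply: eq_imset => q /=; exact: act_cat.
Qed.

Lemma rk_cat (n : nat) (Sigma : finType) (delta : 'I_n -> Sigma -> 'I_n) x y :
  (rk delta (x ++ y) <= rk delta x)%N.
Proof. by rewrite /rk imQ_cat leq_imset_card. Qed.

Lemma actmx_cat (C : fieldType) (n : nat) (Sigma : finType)
  (delta : 'I_n -> Sigma -> 'I_n) x y :
  actmx C delta (x ++ y) = actmx C delta x *m actmx C delta y.
Proof.
apply/matrixP => p q; rewrite !mxE (bigD1 (act delta p x)) //= big1.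
  by rewrite !mxE eqxx mul1r addr0 act_cat.
by move=> r /negbTE hr; rewrite !mxE eq_sym hr mul0r.
Qed.

Lemma actmx_nil (C : fieldType) (n : nat) (Sigma : finType)
  (delta : 'I_n -> Sigma -> 'I_n) : actmx C delta [::] = 1%:M.
Proof. by apply/matrixP => p q; rewrite !mxE. Qed.

Lemma rho_cat (C : fieldType) (n : nat) (Sigma : finType)
  (delta : 'I_n -> Sigma -> 'I_n) (rho : seq Sigma -> 'M[C]_(n.-1)) :
  induced_rep delta rho -> forall x y, rho (x ++ y) = rho x *m rho y.
Proof.
move=> [B [fB _ HB]] x y; apply: (row_free_inj fB) => /=.
by rewrite -HB actmx_cat mulmxA HB -!mulmxA HB.
Qed.

Lemma rho_nil (C : fieldType) (n : nat) (Sigma : finType)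
  (delta : 'I_n -> Sigma -> 'I_n) (rho : seq Sigma -> 'M[C]_(n.-1)) :
  induced_rep delta rho -> rho [::] = 1%:M.
Proof.
move=> [B [fB _ HB]]; apply: (row_free_inj fB) => /=.
by rewrite -HB actmx_nil mulmx1 mul1mx.
Qed.

Lemma rho_det (C : fieldType) (n : nat) (Sigma : finType)
  (delta : 'I_n -> Sigma -> 'I_n) (rho : seq Sigma -> 'M[C]_(n.-1)) :
  induced_rep delta rho -> forall x y,
  (forall q, act delta q x = act delta q y) -> rho x = rho y.
Proof.
move=> [B [fB _ HB]] x y E; apply: (row_free_inj fB) => /=.
rewrite -!HB; congr (B *m _); apply/matrixP => p q; by rewrite !mxE E.
Qed.

Fixpoint spow {T : Type} (s : seq T) (k : nat) : seq T :=
  if k is k'.+1 then s ++ spow s k' else [::].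

Lemma spowD (T : Type) (s : seq T) a b : spow s (a + b) = spow s a ++ spow s b.
Proof. by elim: a => //= a IH; rewrite IH catA. Qed.

Lemma stab (C : fieldType) (n : nat) (Sigma : finType)
  (delta : 'I_n -> Sigma -> 'I_n) (m : nat) (th : seq Sigma -> 'M[C]_m)
  (I : 'M[C]_m -> Prop) :
  (forall x y, th (x ++ y) = th x *m th y) ->
  (forall x y, (forall q, act delta q x = act delta q y) -> th x = th y) ->
  th [::] = 1%:M ->
  zero_minimal_ideal (fun g => exists w, g = th w) I ->
  forall g a, I g -> g *m th a != 0 -> exists b, g *m th a *m th b = g.
Proof.
move=> Hmul Hdet Hnil [[_ [IM Icl]] [_ Imin]] g a Ig hn0.
set h := g *m th a in hn0 *.
have Ih : I h by case: (Icl g (th a) Ig (ex_intro _ a erefl)).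
pose J := fun x => exists y z, x = th y *m h *m th z.
have Jh : J h by exists [::], [::]; rewrite Hnil mul1mx mulmx1.
have JI : forall x, J x -> I x.
  move=> x [y [z ->]].
  have [_ I1] := Icl h (th y) Ih (ex_intro _ y erefl).
  by case: (Icl _ (th z) I1 (ex_intro _ z erefl)).
have mJ : mon_ideal (fun g => exists w, g = th w) J.
  split; first by exists h.
  split; first by move=> x /JI /IM.
  move=> x y [y1 [z1 ->]] [w ->]; split.
    by exists y1, (z1 ++ w); rewrite Hmul !mulmxA.
  by exists (w ++ y1), z1; rewrite Hmul !mulmxA.
case: (Imin J mJ JI) => [/(_ h Jh) h0 | JIeq]; first by rewrite h0 eqxx in hn0.
have [y [z gE]] := proj2 (JIeq g) Ig.
set s := a ++ z.
have gE1 : g = th y *m g *m th s by rewrite Hmul [in LHS]gE /h !mulmxA.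
have gEk : forall k, g = th (spow y k) *m g *m th (spow s k).
  elim=> [|k IH]; first by rewrite /= Hnil mul1mx mulmx1.
  have -> : spow s k.+1 = spow s k ++ s by rewrite -addn1 spowD /= cats0.
  rewrite /= !Hmul.
  by rewrite -!mulmxA -Hmul -/s !mulmxA {1}gE1 {1}IH !mulmxA.
pose F := fun j : 'I_(#|{ffun 'I_n -> 'I_n}|.+1) =>
  [ffun q => act delta q (spow s j)].
have : ~~ injectiveb F.
  apply/negP => /injectiveP inj; have := leq_card F inj.
  by rewrite card_ord ltnn.
case/injectivePn => j1 [j2 neq FE].
have : exists k1 p, (0 < p)%N /\ th (spow s k1) = th (spow s (k1 + p)).
  have Hj : forall (i1 i2 : 'I_(#|{ffun 'I_n -> 'I_n}|.+1)), F i1 = F i2 ->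
      th (spow s i1) = th (spow s i2).
    move=> i1 i2 E; apply: Hdet => q.
    by have := congr1 (fun f : {ffun _ -> _} => f q) E; rewrite /F !ffunE.
  case: (ltngtP j1 j2) => [lt|lt|eq]; last by rewrite (val_inj eq) eqxx in neq.
    exists j1, (j2 - j1)%N; split; first by rewrite subn_gt0.
    by rewrite subnKC ?(ltnW lt) // (Hj _ _ FE).
  exists j2, (j1 - j2)%N; split; first by rewrite subn_gt0.
  by rewrite subnKC ?(ltnW lt) // (Hj _ _ FE).
case=> k1 [p [p0 Ep]].
have per : forall mm j, (k1 <= mm)%N -> th (spow s (mm + j * p)) = th (spow s mm).
  move=> mm j le; rewrite -(subnK le) -addnA spowD [in RHS]spowD !Hmul; congr (_ *m _).
  elim: j => [|j IH]; first by rewrite mul0n addn0.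
  by rewrite mulSn addnA spowD Hmul -Ep -Hmul -spowD IH.
set e := (k1.+1 * p)%N.
have e0 : (0 < e)%N by rewrite muln_gt0.
have ke : (k1 <= e)%N by rewrite /e mulSn; apply: leq_trans (leq_addl _ _); rewrite leq_pmulr.
have gX : g *m th (spow s e) = g.
  rewrite [in LHS](gEk e) -!mulmxA -Hmul -spowD /e -/e per //.
  by rewrite mulmxA -gEk.
exists (z ++ spow s e.-1).
rewrite -mulmxA -Hmul catA -/s.
have -> : s ++ spow s e.-1 = spow s e by rewrite -(prednK e0).
exact: gX.
Qed.

Lemma factor_cat (Sigma : Type) (u w a : seq Sigma) :
  factor_of u w -> factor_of u (w ++ a).
Proof. by case=> [x [y ->]]; exists x, (y ++ a); rewrite -!catA. Qed.
Arguments factor_cat {Sigma u w} a.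

Lemma Krep (C : fieldType) (n : nat) (Sigma : finType)
  (delta : 'I_n -> Sigma -> 'I_n) (k : nat) (ni : 'I_k -> nat)
  (theta : forall i : 'I_k, seq Sigma -> 'M[C]_(ni i)) (u : seq Sigma) (i : 'I_k)
  (I : 'M[C]_(ni i) -> Prop) :
  (forall x y, theta i (x ++ y) = theta i x *m theta i y) ->
  (forall x y, (forall q, act delta q x = act delta q y) -> theta i x = theta i y) ->
  theta i [::] = 1%:M ->
  zero_minimal_ideal (fun g => exists w, g = theta i w) I ->
  forall g a w, I g -> g *m theta i a != 0 ->
  @represents C n Sigma delta k ni theta u i g w ->
  @represents C n Sigma delta k ni theta u i (g *m theta i a) (w ++ a) /\
  rk delta (w ++ a) = rk delta w.
Proof.
move=> Hmul Hdet Hnil Hz g a w Ig ga0 [fw [tw mw]].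
have g0 : g != 0 by apply: contraNneq ga0 => ->; rewrite mul0mx.
have {}mw : forall w', factor_of u w' -> theta i w' = g -> (rk delta w <= rk delta w')%N.
  by case: mw => // g0'; rewrite g0' eqxx in g0.
have [b Hb] := @stab C n Sigma delta (ni i) (theta i) I Hmul Hdet Hnil Hz g a Ig ga0.
have rkeq : rk delta (w ++ a) = rk delta w.
  apply/eqP; rewrite eqn_leq rk_cat /=.
  have h1 := mw ((w ++ a) ++ b) (factor_cat _ (factor_cat _ fw)).
  rewrite !Hmul tw in h1; have {}h1 := h1 Hb.
  exact: (leq_trans h1 (rk_cat _ _ _ _ _)).
split=> //; split; first exact: factor_cat.
split; first by rewrite Hmul tw.
right=> w' fw' tw'; rewrite rkeq.
have h1 := mw (w' ++ b) (factor_cat _ fw').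
rewrite Hmul tw' in h1; have {}h1 := h1 Hb.
exact: (leq_trans h1 (rk_cat _ _ _ _ _)).
Qed.

Arguments Krep {C n Sigma delta k ni theta u i I}.

Lemma Hside (C : fieldType) (n : nat) (Sigma : finType)
  (delta : 'I_n -> Sigma -> 'I_n) (k : nat) (ni : 'I_k -> nat)
  (theta : forall i : 'I_k, seq Sigma -> 'M[C]_(ni i)) (u : seq Sigma) (i : 'I_k)
  (I : 'M[C]_(ni i) -> Prop) :
  (forall x y, theta i (x ++ y) = theta i x *m theta i y) ->
  (forall x y, (forall q, act delta q x = act delta q y) -> theta i x = theta i y) ->
  theta i [::] = 1%:M ->
  zero_minimal_ideal (fun g => exists w, g = theta i w) I ->
  forall g f a w1 w2, I g -> I f -> f *m theta i a != 0 ->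
  @represents C n Sigma delta k ni theta u i g w1 ->
  @represents C n Sigma delta k ni theta u i f w2 ->
  (1 < #|imQ delta w1 :&: imQ delta w2|)%N ->
  exists w1' w2',
    @represents C n Sigma delta k ni theta u i (g *m theta i a) w1' /\
    @represents C n Sigma delta k ni theta u i (f *m theta i a) w2' /\
    (1 < #|imQ delta w1' :&: imQ delta w2'|)%N.
Proof.
move=> Hmul Hdet Hnil Hz g f a w1 w2 Ig If fa0 rep1 rep2 card12.
have [r2 rk2] := Krep Hmul Hdet Hnil Hz f a w2 If fa0 rep2.
have r1 : @represents C n Sigma delta k ni theta u i (g *m theta i a) (w1 ++ a).
  case: (eqVneq (g *m theta i a) 0) => [g0|ga0].
    case: rep1 => [fw [tw _]]; split; first exact: factor_cat.
    by split; [rewrite Hmul tw | left].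
  exact: (Krep Hmul Hdet Hnil Hz g a w1 Ig ga0 rep1).1.
exists (w1 ++ a), (w2 ++ a); split=> //; split=> //.
set fa := fun q => act delta q a.
have inj : {in imQ delta w2 &, injective fa}.
  by apply/imset_injP; move: rk2; rewrite /rk imQ_cat => ->.
have cX : #|fa @: (imQ delta w1 :&: imQ delta w2)| = #|imQ delta w1 :&: imQ delta w2|.
  by apply: card_in_imset; apply: sub_in2 inj => q; rewrite inE => /andP[_ ->].
have sub : fa @: (imQ delta w1 :&: imQ delta w2) \subset imQ delta (w1 ++ a) :&: imQ delta (w2 ++ a).
  apply/subsetP => x /imsetP [q0]; rewrite inE => /andP [h1 h2] ->.
  by rewrite inE !imQ_cat !imset_f.
have := subset_leq_card sub; rewrite cX => H.
exact: leq_trans card12 H.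
Qed.

Arguments Hside {C n Sigma delta k ni theta u i I}.

Theorem mainTheorem9 (C : numClosedFieldType) (n : nat) (Sigma : finType)
  (delta : 'I_n -> Sigma -> 'I_n)
  (rho : seq Sigma -> 'M[C]_(n.-1))
  (k : nat) (ni : 'I_k -> nat)
  (Phi : forall i : 'I_k, 'M[C]_(n.-1) -> 'M[C]_(ni i))
  (I : forall i : 'I_k, 'M[C]_(ni i) -> Prop) :
  synchronizing delta ->
  induced_rep delta rho ->
  wedderburn_data (gen_alg (fun A => exists w, A = rho w)) Phi ->
  (forall i : 'I_k,
     zero_minimal_ideal (fun g => exists w, g = Phi i (rho w)) (I i)) ->
  forall (v u : seq Sigma) (i : 'I_k),
    v_minimal (thetaOf Phi rho) v u ->
    i \in supp (thetaOf Phi rho) u ->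
    forall g f : 'M[C]_(ni i), I i g -> I i f ->
      @sigma_rel C n Sigma delta k ni (thetaOf Phi rho) u i g f ->
      forall a : seq Sigma,
        @sigma_rel C n Sigma delta k ni (thetaOf Phi rho) u i
          (g *m Phi i (rho a)) (f *m Phi i (rho a)).
Proof.
move=> _ Hrep [_ [H1 [_ [Hm _]]]] Hz v u i _ _ g f Ig If Hs a.
have Rw : forall w, gen_alg (fun A => exists w, A = rho w) (rho w).
  by move=> w P HS _ _ _ _; apply: HS; exists w.
have Hmul : forall x y, thetaOf Phi rho i (x ++ y) =
    thetaOf Phi rho i x *m thetaOf Phi rho i y.
  by move=> x y; rewrite /thetaOf (rho_cat _ _ _ _ _ Hrep) (Hm _ _ _ (Rw x) (Rw y)).
have Hdet : forall x y, (forall q, act delta q x = act delta q y) ->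
    thetaOf Phi rho i x = thetaOf Phi rho i y.
  by move=> x y E; rewrite /thetaOf (rho_det _ _ _ _ _ Hrep _ _ E).
have Hnil : thetaOf Phi rho i [::] = 1%:M by rewrite /thetaOf (rho_nil _ _ _ _ _ Hrep) H1.
have Hzi := Hz i.
change (zero_minimal_ideal (fun g => exists w, g = thetaOf Phi rho i w) (I i)) in Hzi.
change (@sigma_rel C n Sigma delta k ni (thetaOf Phi rho) u i
          (g *m thetaOf Phi rho i a) (f *m thetaOf Phi rho i a)).
case: Hs => [-> | [w1 [w2 [r1 [r2 c12]]]]]; first by left.
case: (eqVneq (g *m thetaOf Phi rho i a) (f *m thetaOf Phi rho i a)) => [E|NE].
  by left.
right.
case: (eqVneq (f *m thetaOf Phi rho i a) 0) => [f0|fa0].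
  have ga0 : g *m thetaOf Phi rho i a != 0 by rewrite -f0.
  have c21 : (1 < #|imQ delta w2 :&: imQ delta w1|)%N by rewrite setIC.
  have [w2' [w1' [q2 [q1 c]]]] :=
    Hside Hmul Hdet Hnil Hzi f g a w2 w1 If Ig ga0 r2 r1 c21.
  by exists w1', w2'; split=> //; split=> //; rewrite setIC.
exact: (Hside Hmul Hdet Hnil Hzi g f a w1 w2 Ig If fa0 r1 r2 c12).
Qed.
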